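(* Let $\mathbb{K}\in\{\mathbb{R},\mathbb{C}\}$, let $(X_c,\Lambda_c)\in\mathbb{K}^{n\times p}\times\mathbb{K}^{p\times p}$ be an invariant pair of $Q(\lambda)=\lambda^2M+\lambda D+K\in\mathbb{K}^{n\times n}[\lambda]$, and let $\Lambda_a\in\mathbb{K}^{p\times p}$ be such that $(X_c,\Lambda_a)$ is minimal. Then the perturbed polynomials $Q_\triangle(\lambda)=\lambda^2(M+\triangle M)+\lambda(D+\triangle D)+(K+\triangle K)\in\mathbb{K}^{n\times n}[\lambda]$ for which $(X_c,\Lambda_a)$ is an invariant pair are exactly those with $\triangle M=Z_1-WR(\Lambda_a^2)^*X_c^*$, $\triangle D=Z_2-WR\Lambda_a^*X_c^*$, $\triangle K=Z_3-WRX_c^*$, where $W=MX_c(\Lambda_a^2-\Lambda_c^2)+DX_c(\Lambda_a-\Lambda_c)+Z_1X_c\Lambda_a^2+Z_2X_c\Lambda_a+Z_3X_c$, $R=\big((X_c\Lambda_a^2)^*X_c\Lambda_a^2+(X_c\Lambda_a)^*X_c\Lambda_a+X_c^*X_c\big)^{-1}$, and $Z_1,Z_2,Z_3\in\mathbb{K}^{n\times n}$ are arbitrary.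
   Context: $A^*$ denotes the conjugate transpose. A pair $(X,\Lambda)\in\mathbb{K}^{n\times k}\times\mathbb{K}^{k\times k}$ is minimal if there is a positive integer $m$ such that $\begin{bmatrix}X\Lambda^{m-1}\\ \vdots\\ X\Lambda\\ X\end{bmatrix}$ has full column rank. A pair $(X,\Lambda)$ is an invariant pair of $\lambda^2M+\lambda D+K$ if $MX\Lambda^2+DX\Lambda+KX=0$.
   Formalization: The matrix $(X_c\Lambda_a^2)^*X_c\Lambda_a^2+(X_c\Lambda_a)^*X_c\Lambda_a+X_c^*X_c$ defining R is assumed invertible, besides minimality of $(X_c,\Lambda_a)$. The statement above fails without it. *)

(* Defs.v *)
From HB Require Import structures.
From mathcomp Require Import all_boot all_order all_algebra.
From mathcomp Require Import complex.
From mathcomp Require Import Rstruct.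
Set Implicit Arguments. Unset Strict Implicit. Unset Printing Implicit Defensive.
Import Order.TTheory GRing.Theory Num.Theory.
Local Open Scope ring_scope.

Section Defs.
Variable F : fieldType.

Definition mxpow (p : nat) (L : 'M[F]_p) (k : nat) : 'M[F]_p :=
  iter k (fun A => A *m L) 1%:M.

(* Star operation: A^* = (conj A)^T for a given field involution c
   (c = id over the reals, c = complex conjugation over C). *)
Definition cadj (c : F -> F) (m n : nat) (A : 'M[F]_(m, n)) : 'M[F]_(n, m) :=
  (map_mx c A)^T.

Definition invariant_pair (n p : nat) (M D K : 'M[F]_n)
  (X : 'M[F]_(n, p)) (L : 'M[F]_p) : Prop :=
  M *m X *m mxpow L 2 + D *m X *m L + K *m X = 0.

Definition minimal_pair (n p : nat) (X : 'M[F]_(n, p)) (L : 'M[F]_p) : Prop :=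
  exists m : nat, (0 < m)%N /\
    \rank (\mxcol_(i < m) (X *m mxpow L (m.-1 - i)) : 'M[F]_(\sum_(i < m) n, p))
      = p.

Definition theorem3p2_body (c : F -> F) : Prop :=
  forall (n p : nat) (M D K : 'M[F]_n) (Xc : 'M[F]_(n, p)) (Lc La : 'M[F]_p),
    invariant_pair M D K Xc Lc ->
    minimal_pair Xc La ->
    (* presupposition of the paper: the matrix inverted to define R exists *)
    (cadj c (Xc *m mxpow La 2) *m (Xc *m mxpow La 2)
       + cadj c (Xc *m La) *m (Xc *m La) + cadj c Xc *m Xc) \in unitmx ->
    forall dM dD dK : 'M[F]_n,
      invariant_pair (M + dM) (D + dD) (K + dK) Xc La <->
      exists Z1 Z2 Z3 : 'M[F]_n,
        let W := M *m Xc *m (mxpow La 2 - mxpow Lc 2) + D *m Xc *m (La - Lc)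
                 + Z1 *m Xc *m mxpow La 2 + Z2 *m Xc *m La + Z3 *m Xc in
        let R := invmx (cadj c (Xc *m mxpow La 2) *m (Xc *m mxpow La 2)
                        + cadj c (Xc *m La) *m (Xc *m La) + cadj c Xc *m Xc) in
        [/\ dM = Z1 - W *m R *m cadj c (mxpow La 2) *m cadj c Xc,
            dD = Z2 - W *m R *m cadj c La *m cadj c Xc
          & dK = Z3 - W *m R *m cadj c Xc].
End Defs.

(* Main.v *)
Require Import Defs.
From HB Require Import structures.
From mathcomp Require Import all_boot all_order all_algebra.
From mathcomp Require Import complex.
From mathcomp Require Import Rstruct ring.
Set Implicit Arguments. Unset Strict Implicit. Unset Printing Implicit Defensive.
Import GRing.Theory.
Local Open Scope ring_scope.

Lemma gen (F : fieldType) (c : F -> F)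
  (hc : forall m n k (A : 'M[F]_(m,n)) (B : 'M[F]_(n,k)),
      cadj c (A *m B) = cadj c B *m cadj c A) : theorem3p2_body c.
Proof.
move=> n p M D K Xc Lc La Hinv _ Hu dM dD dK.
rewrite /invariant_pair in Hinv *.
set L2 := mxpow La 2. set C2 := mxpow Lc 2.
split.
- move=> H; exists dM, dD, dK => /=.
  set W := (X in X *m invmx _).
  suff -> : W = 0 by rewrite !mul0mx !subr0.
  rewrite /W -[RHS](subrr ((M + dM) *m Xc *m L2 + (D + dD) *m Xc *m La + (K + dK) *m Xc)).
  rewrite {2}H -{1}Hinv.
  rewrite !mulmxDl !mulmxBr.
  apply/matrixP=> i j; rewrite !mxE. ring.
- case=> Z1 [Z2 [Z3]] /=.
  set S := (X in invmx X).
  set W := (X in X *m invmx _).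
  case=> -> -> ->.
  have E : W *m invmx S *m cadj c L2 *m cadj c Xc *m (Xc *m L2)
     + W *m invmx S *m cadj c La *m cadj c Xc *m (Xc *m La)
     + W *m invmx S *m cadj c Xc *m Xc = W.
    have E0 : W *m invmx S *m S = W by rewrite -mulmxA mulVmx // mulmx1.
    rewrite -{4}E0 /S !mulmxDr !hc !mulmxA //.
  transitivity (M *m Xc *m L2 + Z1 *m Xc *m L2 + D *m Xc *m La + Z2 *m Xc *m La
     + K *m Xc + Z3 *m Xc -
     (W *m invmx S *m cadj c L2 *m cadj c Xc *m (Xc *m L2)
     + W *m invmx S *m cadj c La *m cadj c Xc *m (Xc *m La)
     + W *m invmx S *m cadj c Xc *m Xc)).
    clear E; clearbody W S.
    rewrite !mulmxDl ?mulmxBl ?mulNmx !mulmxA.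
    apply/matrixP=> i j; rewrite !mxE. ring.
  rewrite E /W -[RHS]Hinv ?mulmxDl !mulmxBr.
  apply/matrixP=> i j; rewrite !mxE. ring.
Qed.

Theorem theorem3p2 :
  theorem3p2_body (F := Rdefinitions.R) id /\
  theorem3p2_body (F := complex Rdefinitions.R) (@conjc Rdefinitions.R).
Proof.
split; apply: gen => m n k A B; rewrite /cadj.
- have mid : forall m n (X : 'M[Rdefinitions.R]_(m,n)), map_mx id X = X by move=> *; apply/matrixP=> i j; rewrite mxE.
  by rewrite !mid trmx_mul.
- by rewrite map_mxM trmx_mul.
Qed.
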